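(* Let $n\ge 1$ and let $d$ be a positive integer with $d\le n$. The number of closed walks of length $d$ in the graph $G(n,312)$ is $\binom{2d}{d}$.
   Context: For a sequence $x=x_1\cdots x_m$ of distinct real numbers, its standardization $\Pi(x)$ is the unique permutation $\pi\in\mathfrak S_m$ with $\pi_i<\pi_j \iff x_i<x_j$ for all $i,j$. A permutation $\pi\in\mathfrak S_m$ avoids $312$ if there are no indices $i<j<k$ with $\pi_j<\pi_k<\pi_i$; $\mathfrak S_m(312)$ denotes the set of such permutations. The graph $G(n,312)$ is the directed multigraph with vertex set $\mathfrak S_n(312)$ having, for each $\sigma=\sigma_1\cdots\sigma_{n+1}\in\mathfrak S_{n+1}(312)$, one directed edge labelled $\sigma$ from $\Pi(\sigma_1\cdots\sigma_n)$ (its tail) to $\Pi(\sigma_2\cdots\sigma_{n+1})$ (its head). A closed walk of length $d$ is a list of $d$ edges $(e_1,\dots,e_d)$ with $\mathrm{head}(e_i)=\mathrm{tail}(e_{i+1})$ for $1\le i\le d-1$ and $\mathrm{head}(e_d)=\mathrm{tail}(e_1)$; different cyclic shifts of a closed walk count as different closed walks. *)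

(* Defs.v *)
From mathcomp Require Import all_boot.
Set Implicit Arguments. Unset Strict Implicit. Unset Printing Implicit Defensive.

(* Permutations of [m] are represented as sequences of naturals that are
   rearrangements of [1; ...; m] (one-line notation). *)

Definition perms (m : nat) : seq (seq nat) := permutations (iota 1 m).

Definition standardize (x : seq nat) : seq nat :=
  [seq (count (fun y => y < xi) x).+1 | xi <- x].

Definition avoids312 (s : seq nat) : bool :=
  all (fun i => all (fun j => all (fun k =>
     ~~ [&& i < j, j < k, nth 0 s j < nth 0 s k & nth 0 s k < nth 0 s i])
     (iota 0 (size s))) (iota 0 (size s))) (iota 0 (size s)).

Definition S312 (m : nat) : seq (seq nat) := [seq s <- perms m | avoids312 s].

Definition edge_tail (sigma : seq nat) : seq nat :=
  standardize (take (size sigma).-1 sigma).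
Definition edge_head (sigma : seq nat) : seq nat :=
  standardize (behead sigma).

Fixpoint lists_of {T : Type} (L : seq T) (d : nat) : seq (seq T) :=
  if d is d'.+1 then [seq x :: w | x <- L, w <- lists_of L d'] else [:: [::]].

Definition is_closed_walk (w : seq (seq nat)) : bool :=
  all (fun i => edge_head (nth [::] w i) == edge_tail (nth [::] w (i.+1 %% size w)))
      (iota 0 (size w)).

(* Number of closed walks of length d in G(n,312); edges are the elements
   of S_{n+1}(312), so walks are d-lists of such edges. *)
Definition num_closed_walks (n d : nat) : nat :=
  count is_closed_walk (lists_of (S312 n.+1) d).

(* Main.v *)
Require Import Defs.
From mathcomp Require Import all_boot zify.
Set Implicit Arguments. Unset Strict Implicit. Unset Printing Implicit Defensive.


Lemma count_lt_strict (x : seq nat) a b :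
  a < b -> a \in x -> count (fun y => y < a) x < count (fun y => y < b) x.
Proof.
move=> ab; elim: x => [|h t IH] //=; rewrite inE => /orP [/eqP <-|ht].
  rewrite ltnn ab /= add0n add1n ltnS; apply: sub_count => y /= ya; lia.
have := IH ht; case: (ltnP h a) => ha /=; case: (ltnP h b) => hb /=; lia.
Qed.

Lemma count_lt_mono (x : seq nat) a b :
  a <= b -> count (fun y => y < a) x <= count (fun y => y < b) x.
Proof. move=> ab; apply: sub_count => y /= ya; lia. Qed.

Lemma nth_std (x : seq nat) i : i < size x ->
  nth 0 (standardize x) i = (count (fun y => y < nth 0 x i) x).+1.
Proof. by move=> ix; rewrite /standardize (nth_map 0). Qed.

Lemma size_std x : size (standardize x) = size x.
Proof. by rewrite size_map. Qed.

Lemma std_cmp (x : seq nat) i j : uniq x -> i < size x -> j < size x ->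
  (nth 0 (standardize x) i < nth 0 (standardize x) j) = (nth 0 x i < nth 0 x j).
Proof.
move=> ux ix jx; rewrite !nth_std // ltnS.
case: (ltnP (nth 0 x i) (nth 0 x j)) => h.
  by apply: count_lt_strict => //; apply: mem_nth.
apply/negbTE; rewrite -leqNgt; exact: count_lt_mono.
Qed.

Definition samecmp (x y : seq nat) := size x = size y /\
  forall i j, i < size x -> j < size x -> (nth 0 x i < nth 0 x j) = (nth 0 y i < nth 0 y j).

Lemma count_idx (p : pred nat) (x : seq nat) :
  count p x = count (fun j => p (nth 0 x j)) (iota 0 (size x)).
Proof. by rewrite -{1}(mkseq_nth 0 x) /mkseq count_map. Qed.

Lemma std_same x y : samecmp x y -> standardize x = standardize y.
Proof.
move=> [sz cmp]; apply: (@eq_from_nth _ 0); first by rewrite !size_std.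
rewrite size_std => i ix; rewrite !nth_std -?sz //; congr S.
rewrite (count_idx _ x) (count_idx _ y) -sz; apply: eq_in_count => j.
by rewrite mem_iota add0n => /andP [_ jx] /=; rewrite cmp.
Qed.

Lemma samecmp_std x : uniq x -> samecmp x (standardize x).
Proof. by move=> ux; split; [rewrite size_std | move=> i j ix jx; rewrite std_cmp]. Qed.

Lemma samecmp_sym x y : samecmp x y -> samecmp y x.
Proof. by move=> [sz c]; split=> // i j; rewrite -sz => ix jx; rewrite c. Qed.

Lemma avoids_same x y : samecmp x y -> avoids312 x = avoids312 y.
Proof.
move=> [sz c]; rewrite /avoids312 -sz.
apply: eq_in_all => i; rewrite mem_iota add0n => /andP [_ ix].
apply: eq_in_all => j; rewrite mem_iota add0n => /andP [_ jx].
apply: eq_in_all => k; rewrite mem_iota add0n => /andP [_ kx].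
by rewrite !c.
Qed.

Lemma count_lt_iota v a N : count (fun y => y < v) (iota a N) = minn (v - a) N.
Proof.
elim: N a => [|N IH] a /=; first by rewrite minn0.
rewrite IH; case: (ltnP a v) => h /=; lia.
Qed.

Lemma std_perm N x : perm_eq x (iota 1 N) -> standardize x = x.
Proof.
move=> px; apply: (@eq_from_nth _ 0); first by rewrite size_std.
rewrite size_std => i ix; rewrite nth_std //.
have m : nth 0 x i \in iota 1 N by rewrite -(perm_mem px) mem_nth.
move: m; rewrite mem_iota => /andP [h1 h2].
by move/permP: px => ->; rewrite count_lt_iota; lia.
Qed.

Lemma GP (s : seq nat) N : uniq s -> size s = N ->
  (forall x, x \in s -> 0 < x <= N) -> perm_eq s (iota 1 N).
Proof.
move=> us sz hb; apply: uniq_perm => //; first exact: iota_uniq.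
have sub : {subset s <= iota 1 N}.
  by move=> x /hb /andP [h1 h2]; rewrite mem_iota; lia.
have h : size (iota 1 N) <= size s by rewrite size_iota sz.
by have [_ e] := uniq_min_size us sub h.
Qed.

Lemma std_uniq_perm x : uniq x -> perm_eq (standardize x) (iota 1 (size x)).
Proof.
move=> ux; apply: GP; [ | by rewrite size_std | ]; last first.
  move=> v /(nthP 0) [i]; rewrite size_std => ix <-; rewrite nth_std //.
  apply/andP; split => //.
  have := count_predC (fun y => y < nth 0 x i) x.
  have : 0 < count (predC (fun y => y < nth 0 x i)) x.
    rewrite -has_count; apply/hasP; exists (nth 0 x i); first exact: mem_nth.
    by rewrite /= ltnn.
  by move=> h1 <-; rewrite -[X in X < _]addn0 ltn_add2l.
apply/(uniqP 0) => i j; rewrite !inE size_std => ix jx e.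
have h1 := std_cmp ux ix jx; have h2 := std_cmp ux jx ix.
rewrite e ltnn in h1 h2.
have : nth 0 x i = nth 0 x j.
  by case: (ltngtP (nth 0 x i) (nth 0 x j)) h1 h2 => // _ ->.
by move/eqP; rewrite nth_uniq // => /eqP.
Qed.


Lemma samecmp_take k x y : samecmp x y -> samecmp (take k x) (take k y).
Proof.
move=> [sz c]; split; first by rewrite !size_take sz.
move=> i j; rewrite size_take; case: (ltnP k (size x)) => h ik jk.
  by rewrite (nth_take _ ik) (nth_take _ jk) (nth_take _ ik) (nth_take _ jk) c //; apply: ltn_trans h.
have ik' : i < k by apply: leq_trans h.
have jk' : j < k by apply: leq_trans h.
by rewrite (nth_take _ ik') (nth_take _ jk') (nth_take _ ik') (nth_take _ jk') c.
Qed.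

Lemma samecmp_behead x y : samecmp x y -> samecmp (behead x) (behead y).
Proof.
move=> [sz c]; split; first by rewrite !size_behead sz.
move=> i j; rewrite size_behead => ix jx.
by rewrite !nth_behead c //; lia.
Qed.

Lemma std_take_std k x : uniq x -> standardize (take k (standardize x)) = standardize (take k x).
Proof. by move=> ux; apply: std_same; apply: samecmp_sym; apply: samecmp_take; apply: samecmp_std. Qed.

Lemma std_behead_std x : uniq x -> standardize (behead (standardize x)) = standardize (behead x).
Proof. by move=> ux; apply: std_same; apply: samecmp_sym; apply: samecmp_behead; apply: samecmp_std. Qed.

Definition sh (v x : nat) : nat := x + (v <= x).
Definition ins (t : seq nat) (v : nat) : seq nat := rcons (map (sh v) t) v.

Lemma sh_lt v a b : (sh v a < sh v b) = (a < b).
Proof. rewrite /sh; case: (leqP v a) => h1; case: (leqP v b) => h2 /=; lia. Qed.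

Lemma sh_lt_v v a : (sh v a < v) = (a < v).
Proof. rewrite /sh; case: (leqP v a) => h1 /=; lia. Qed.

Lemma sh_inj v : injective (sh v).
Proof.
move=> a b e; case: (ltngtP a b) => // h.
  by have := sh_lt v a b; rewrite e ltnn h.
by have := sh_lt v b a; rewrite e ltnn h.
Qed.

Lemma samecmp_sh v t : samecmp (map (sh v) t) t.
Proof.
split; first by rewrite size_map.
by move=> i j; rewrite size_map => it jt; rewrite !(nth_map 0) // sh_lt.
Qed.

Lemma avoidsP s i j k : avoids312 s -> i < j -> j < k -> k < size s ->
  ~~ ((nth 0 s j < nth 0 s k) && (nth 0 s k < nth 0 s i)).
Proof.
move=> /allP /(_ i) h ij jk ks.
have mi : i \in iota 0 (size s) by rewrite mem_iota; lia.
have mj : j \in iota 0 (size s) by rewrite mem_iota; lia.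
have mk : k \in iota 0 (size s) by rewrite mem_iota; lia.
move: (h mi) => /allP /(_ j mj) /allP /(_ k mk).
by rewrite ij jk.
Qed.

Lemma avoidsI s : (forall i j k, i < j -> j < k -> k < size s ->
  ~~ ((nth 0 s j < nth 0 s k) && (nth 0 s k < nth 0 s i))) -> avoids312 s.
Proof.
move=> h; apply/allP => i; rewrite mem_iota => /andP [_ ik].
apply/allP => j; rewrite mem_iota => /andP [_ jk].
apply/allP => k; rewrite mem_iota => /andP [_ kk].
case: (ltnP i j) => ij //; case: (ltnP j k) => jk' //=.
exact: h.
Qed.

Lemma perm_iota_uniq x N : perm_eq x (iota 1 N) -> uniq x.
Proof. by move=> p; rewrite (perm_uniq p) iota_uniq. Qed.

Lemma perm_iota_mem x N v : perm_eq x (iota 1 N) -> (v \in x) = (0 < v <= N).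
Proof. move=> p; rewrite (perm_mem p) mem_iota; lia. Qed.

Lemma count_perm_iota x N v : perm_eq x (iota 1 N) -> 0 < v <= N.+1 ->
  count (fun y => y < v) x = v.-1.
Proof. move=> p hv; move/permP: p => ->; rewrite count_lt_iota; lia. Qed.

Lemma ins_perm t N v : perm_eq t (iota 1 N) -> 0 < v <= N.+1 ->
  perm_eq (ins t v) (iota 1 N.+1).
Proof.
move=> p hv; apply: GP.
- rewrite rcons_uniq map_inj_uniq ?(perm_iota_uniq p) ?andbT; last exact: sh_inj.
  apply/negP => /mapP [y _ e]; move: e; rewrite /sh; case: leqP => h /=; lia.
- by rewrite size_rcons size_map (perm_size p) size_iota.
move=> x; rewrite mem_rcons inE => /orP [/eqP -> //|/mapP [y yt ->]].
by move: yt; rewrite (perm_iota_mem _ p) /sh; case: leqP => h /=; lia.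
Qed.

Lemma count_sh v a u : count (fun y => y < sh v a) (map (sh v) u) = count (fun y => y < a) u.
Proof. by rewrite count_map; apply: eq_count => y /=; rewrite sh_lt. Qed.

Lemma count_sh_v v u : count (fun y => y < v) (map (sh v) u) = count (fun y => y < v) u.
Proof. by rewrite count_map; apply: eq_count => y /=; rewrite sh_lt_v. Qed.

Lemma std_ins u v : standardize (ins u v) = ins (standardize u) (count (fun y => y < v) u).+1.
Proof.
apply: (@eq_from_nth _ 0); first by rewrite /ins size_std !size_rcons !size_map.
rewrite size_std /ins size_rcons size_map => i; rewrite ltnS leq_eqVlt => /orP [/eqP ->|iu].
  rewrite nth_std ?size_rcons ?size_map // !nth_rcons !size_map ltnn eqxx.
  by rewrite -cats1 count_cat count_sh_v /= ltnn ?addn0.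
rewrite nth_std ?size_rcons ?size_map ?(ltn_trans iu) // !nth_rcons !size_map ?size_std iu.
rewrite (nth_map 0) // (nth_map 0) ?size_std // nth_std //.
rewrite -cats1 count_cat count_sh /= addn0 /sh.
set c := count _ u; set w := count _ u.
have [h|h] := leqP v (nth 0 u i).
  have : w <= c by apply: count_lt_mono.
  by move=> hw; rewrite addn1 ltnS h ltnS hw; lia.
have : c < w by apply: count_lt_strict => //; apply: mem_nth.
by move=> hw; rewrite addn0 ltnNge (ltnW h) ltnS leqNgt hw /=; lia.
Qed.


Lemma rcons_take_last (s : seq nat) N : size s = N.+1 -> s = rcons (take N s) (last 0 s).
Proof.
move=> sz; rewrite -(nth_last 0) sz /= -take_nth ?sz // take_oversize ?sz //.
Qed.

Lemma K1 s N : perm_eq s (iota 1 N.+1) -> s = ins (standardize (take N s)) (last 0 s).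
Proof.
move=> p; have sz : size s = N.+1 by rewrite (perm_size p) size_iota.
have es := rcons_take_last sz.
set u := take N s in es *; set v := last 0 s in es *.
have us : uniq (rcons u v) by rewrite -es (perm_iota_uniq p).
move: (us); rewrite rcons_uniq => /andP [vu _].
rewrite {1}es /ins; congr rcons.
apply: (@eq_from_nth _ 0); first by rewrite size_map size_std.
move=> i iu.
rewrite (nth_map 0) ?size_std // nth_std //.
have mi : nth 0 u i \in s by rewrite es mem_rcons inE mem_nth ?orbT.
rewrite (perm_iota_mem _ p) in mi.
have hc : count (fun y => y < nth 0 u i) s = (nth 0 u i).-1.
  by apply: (count_perm_iota p); lia.
rewrite es -cats1 count_cat /= in hc.
have ne : nth 0 u i != v by apply: contraNneq vu => <-; apply: mem_nth.
set c := count _ u in hc *.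
move: hc ne; rewrite /sh; case: (ltnP v (nth 0 u i)) => h /= hc ne.
  have -> : (v <= c.+1) = true by apply/idP; lia.
  lia.
have h' : nth 0 u i < v.
  by move: h ne; rewrite leq_eqVlt => /orP [/eqP -> |//]; rewrite eqxx.
have -> : (v <= c.+1) = false by apply/negbTE; rewrite -ltnNge; lia.
lia.
Qed.

Lemma size_ins t v : size (ins t v) = (size t).+1.
Proof. by rewrite /ins size_rcons size_map. Qed.

Lemma edge_tail_ins t v : edge_tail (ins t v) = standardize t.
Proof.
rewrite /edge_tail size_ins /= /ins -cats1 take_size_cat ?size_map //.
by apply: std_same; apply: samecmp_sh.
Qed.

Lemma edge_head_ins a t v : edge_head (ins (a :: t) v) = ins (standardize t) (count (fun y => y < v) t).+1.
Proof. by rewrite /edge_head /ins /= std_ins. Qed.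

Lemma nth_ins t v i : nth 0 (ins t v) i =
  if i < size t then sh v (nth 0 t i) else if i == size t then v else 0.
Proof. rewrite /ins nth_rcons size_map; case: ltnP => h //; by rewrite (nth_map 0). Qed.

Lemma avoids_rcons p x : avoids312 p -> avoids312 (behead (rcons p x)) ->
  (forall j, 0 < j < size p -> ~~ ((nth 0 p j < x) && (x < nth 0 p 0))) ->
  avoids312 (rcons p x).
Proof.
move=> hp hb hx; apply: avoidsI => i j k ij jk; rewrite size_rcons ltnS leq_eqVlt => /orP [/eqP ek|kp].
  case: i ij => [|i] ij.
    have jp : j < size p by rewrite -ek.
    have p0 : 0 < size p by lia.
    rewrite !nth_rcons ek ltnn eqxx jp p0.
    by apply: hx; lia.
  have := avoidsP hb (i := i) (j := j.-1) (k := k.-1).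
  rewrite size_behead size_rcons /= !nth_behead.
  have -> : j.-1.+1 = j by lia.
  have -> : k.-1.+1 = k by lia.
  by apply; lia.
rewrite !nth_rcons kp (ltn_trans jk kp) (ltn_trans ij (ltn_trans jk kp)).
exact: avoidsP.
Qed.


Lemma mem_S312 N s : (s \in S312 N) = perm_eq s (iota 1 N) && avoids312 s.
Proof. by rewrite /S312 mem_filter /perms mem_permutations andbC. Qed.

Lemma S312_uniq N : uniq (S312 N).
Proof. by rewrite filter_uniq // permutations_uniq. Qed.

Lemma ins_eq2 t y z : (ins t y == ins t z) = (y == z).
Proof.
apply/eqP/eqP => [e|-> //]; have := congr1 (last 0) e; by rewrite /ins !last_rcons.
Qed.

Lemma ins_inj t : injective (ins t).
Proof. by move=> y z /eqP; rewrite ins_eq2 => /eqP. Qed.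

Lemma last_mem (s : seq nat) : 0 < size s -> last 0 s \in s.
Proof. by case: s => // x s _; rewrite (@mem_last _ x s). Qed.

Definition fiber N (t t' : seq nat) :=
  [seq s <- S312 N.+2 | (edge_tail s == t) && (edge_head s == t')].

Definition Vset t0 w := (if t0 <= w then [:: w.+1] else [::]) ++ (if w == 1 then [:: 1] else [::]).

Definition flag (s : seq nat) : bool * bool := (head 0 s == 1, last 0 s == 1).
Definition opts (p : bool * bool) : seq (bool * bool) :=
  if p.1 && p.2 then [:: (true, false); (false, true)] else [:: p].

Lemma flag_ins a t v : flag (ins (a :: t) v) = (sh v a == 1, v == 1).
Proof. by rewrite /flag /ins /= last_rcons. Qed.

Section Fib.
Variables (N a : nat) (t' tau' : seq nat).
Hypothesis Ht : (a :: t') \in S312 N.+1.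
Hypothesis Ht' : tau' \in S312 N.+1.
Hypothesis Hc : edge_head (a :: t') = edge_tail tau'.

Let w := last 0 tau'.

Lemma tau'E : tau' = ins (standardize t') w.
Proof.
move: Ht'; rewrite mem_S312 => /andP [p _].
rewrite {1}(K1 p); congr ins.
have sz : size tau' = N.+1 by rewrite (perm_size p) size_iota.
by move: Hc; rewrite /edge_head /edge_tail sz /= => ->.
Qed.

Lemma pt : perm_eq (a :: t') (iota 1 N.+1).
Proof. by move: Ht; rewrite mem_S312 => /andP []. Qed.

Lemma at_ : avoids312 (a :: t').
Proof. by move: Ht; rewrite mem_S312 => /andP []. Qed.

Lemma at'_ : avoids312 tau'.
Proof. by move: Ht'; rewrite mem_S312 => /andP []. Qed.

Lemma w_bound : 0 < w <= N.+1.
Proof.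
move: Ht'; rewrite mem_S312 => /andP [p _].
have sz : size tau' = N.+1 by rewrite (perm_size p) size_iota.
rewrite -(perm_iota_mem _ p) /w; case: tau' sz => // x s _.
by rewrite (@mem_last _ x s).
Qed.

Lemma a_bound : 0 < a <= N.+1.
Proof. by rewrite -(perm_iota_mem _ pt) inE eqxx. Qed.

Lemma count_t' v : 0 < v <= N.+2 -> count (fun y => y < v) t' = v.-1 - (a < v).
Proof. move=> hv; have := count_perm_iota pt hv; rewrite /=; lia. Qed.

Lemma head_ins_eq v : 0 < v <= N.+2 ->
  (edge_head (ins (a :: t') v) == tau') = ((v.-1 - (a < v)).+1 == w).
Proof. by move=> hv; rewrite edge_head_ins tau'E ins_eq2 count_t'. Qed.

Lemma head_ins_tau' v : 0 < v <= N.+2 -> (v.-1 - (a < v)).+1 = w -> edge_head (ins (a :: t') v) = tau'.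
Proof. by move=> hv e; apply/eqP; rewrite head_ins_eq // e. Qed.

Lemma ins_in_S312 v : 0 < v <= N.+2 -> (v.-1 - (a < v)).+1 = w ->
   (a < v) || (v == 1) -> ins (a :: t') v \in S312 N.+2.
Proof.
move=> hv e hav; rewrite mem_S312 ins_perm ?pt //=.
rewrite /ins; apply: avoids_rcons.
- by rewrite (avoids_same (samecmp_sh v (a :: t'))) at_.
- have u : uniq (behead (rcons (map (sh v) (a :: t')) v)).
    have := perm_iota_uniq (ins_perm pt hv).
    by rewrite /ins /= => /andP [].
  rewrite (avoids_same (samecmp_std u)).
  by have := head_ins_tau' hv e; rewrite /edge_head /ins => ->; exact: at'_.
move=> j /andP [_ hj]; rewrite size_map in hj; rewrite !(nth_map 0) //=.
rewrite /sh; case/orP: hav => [av|/eqP v1].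
  have -> : a + (v <= a) = a by rewrite leqNgt av addn0.
  by apply/negP => /andP [_]; lia.
have : nth 0 (a :: t') j \in a :: t' by apply: mem_nth.
rewrite (perm_iota_mem _ pt) v1 => /andP [x0 _].
by rewrite x0 /=; apply/negP => /andP [h _]; lia.
Qed.

Lemma fiber_mem s : (s \in fiber N (a :: t') tau') = has (fun v => s == ins (a :: t') v) (Vset a w).
Proof.
have [w0 wN] := andP w_bound; have [a0 aN] := andP a_bound.
apply/idP/idP.
  rewrite mem_filter => /andP [/andP [/eqP et /eqP eh]].
  rewrite mem_S312 => /andP [ps avs].
  have sz : size s = N.+2 by rewrite (perm_size ps) size_iota.
  have se : s = ins (a :: t') (last 0 s).
    by rewrite {1}(K1 ps) -et /edge_tail sz.
  have vb : 0 < last 0 s <= N.+2.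
    by rewrite -(perm_iota_mem _ ps) last_mem // sz.
  set v := last 0 s in se vb.
  have hw : (v.-1 - (a < v)).+1 = w.
    by apply/eqP; rewrite -head_ins_eq // -se eh.
  have hav : (a < v) || (v == 1).
    case: (ltnP a v) => //= av; apply/negP => vn1.
    have i1 : 1 \in s by rewrite (perm_iota_mem _ ps).
    set j := index 1 s.
    have js : j < size s by rewrite index_mem.
    have sj : nth 0 s j = 1 by rewrite nth_index.
    have s0 : nth 0 s 0 = a.+1.
      by rewrite se nth_ins /= /sh av addn1.
    have sN : nth 0 s N.+1 = v.
      have st : size t' = N by have := perm_size pt; rewrite size_iota /=; case.
      by rewrite se nth_ins /= st ltnn eqxx.
    have j0 : 0 < j by rewrite lt0n; apply/eqP => ej; move: sj; rewrite ej s0; lia.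
    have jN : j < N.+1.
      move: js; rewrite sz ltnS leq_eqVlt => /orP [/eqP ej|//].
      by move: sj; rewrite ej sN => e1; exfalso; apply: vn1; rewrite e1.
    have Ns : N.+1 < size s by rewrite sz.
    have := avoidsP avs j0 jN Ns.
    have vn : v != 1 by apply/negP.
    rewrite sj sN s0; move: vn; lia.
  apply/hasP; exists v; last by rewrite se.
  rewrite mem_cat; case/orP: hav => [av|/eqP v1].
    apply/orP; left; rewrite ifT; last lia.
    by rewrite inE; apply/eqP; lia.
  apply/orP; right; rewrite ifT ?inE ?v1 //.
  by move: hw; rewrite v1 /=; move=> <-; case: (a < 1).
move=> /hasP [v vV /eqP ->].
have [vb hw hav] : [/\ 0 < v <= N.+2, (v.-1 - (a < v)).+1 = w & (a < v) || (v == 1)].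
  move: vV; rewrite mem_cat => /orP [|].
    case: ifP => // aw; rewrite inE => /eqP ->.
    have -> : (a < w.+1) = true by apply/idP; lia.
    split; [lia | lia | by []].
  case: ifP => // /eqP w1; rewrite inE => /eqP ->; split => //.
  by rewrite eqxx orbT.
rewrite mem_filter ins_in_S312 // andbT edge_tail_ins (std_perm pt) eqxx /=.
by rewrite head_ins_eq // hw.
Qed.

Lemma no_bad : 1 < w -> a <= w.
Proof.
move=> w1; rewrite leqNgt; apply/negP => wa.
have [w0 wN] := andP w_bound.
have hv : 0 < w <= N.+2 by lia.
have e : (w.-1 - (a < w)).+1 = w.
  have -> : (a < w) = false by apply/negbTE; rewrite -leqNgt; lia.
  lia.
set s := ins (a :: t') w.
have ps : perm_eq s (iota 1 N.+2) := ins_perm pt hv.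
have st : size t' = N by have := perm_size pt; rewrite size_iota /=; case.
have sz : size s = N.+2 by rewrite size_ins /= st.
have eh := head_ins_tau' hv e.
have ub : uniq (behead s) by have := perm_iota_uniq ps; rewrite /s /ins /= => /andP [].
have ab : avoids312 (behead s) by rewrite (avoids_same (samecmp_std ub)); have := at'_; rewrite -eh.
have am : avoids312 (map (sh w) (a :: t')) by rewrite (avoids_same (samecmp_sh w (a :: t'))) at_.
have nsm x : x < N.+1 -> nth 0 s x = nth 0 (map (sh w) (a :: t')) x.
  by move=> xN; rewrite /s /ins nth_rcons size_map /= st xN.
have s0 : nth 0 s 0 = a.+1 by rewrite nsm //= /sh (ltnW wa) addn1.
have sN : nth 0 s N.+1 = w by rewrite /s nth_ins /= st ltnn eqxx.
have i1 : w.+1 \in s by rewrite (perm_iota_mem _ ps); lia.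
have i2 : 1 \in s by rewrite (perm_iota_mem _ ps); lia.
set j := index w.+1 s; set k := index 1 s.
have js : j < size s by rewrite index_mem.
have ks : k < size s by rewrite index_mem.
have sj : nth 0 s j = w.+1 by rewrite nth_index.
have sk : nth 0 s k = 1 by rewrite nth_index.
have j0 : 0 < j by rewrite lt0n; apply/eqP => ej; move: sj; rewrite ej s0; lia.
have k0 : 0 < k by rewrite lt0n; apply/eqP => ej; move: sk; rewrite ej s0; lia.
have jN : j < N.+1.
  move: js; rewrite sz ltnS leq_eqVlt => /orP [/eqP ej|//].
  by move: sj; rewrite ej sN; lia.
have kN : k < N.+1.
  move: ks; rewrite sz ltnS leq_eqVlt => /orP [/eqP ej|//].
  by move: sk; rewrite ej sN; lia.
case: (ltngtP j k) => jk.
- have := avoidsP ab (i := j.-1) (j := k.-1) (k := N).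
  rewrite size_behead sz !nth_behead.
  have -> : j.-1.+1 = j by lia.
  have -> : k.-1.+1 = k by lia.
  rewrite sj sk sN; move=> h; have := h ltac:(lia) ltac:(lia) ltac:(lia); lia.
- have := avoidsP am (i := 0) (j := k) (k := j).
  rewrite -!nsm // sj sk s0 size_map /= st.
  move=> h; have := h ltac:(lia) ltac:(lia) ltac:(lia); lia.
- by move: sj sk; rewrite jk => ->; lia.
Qed.

Lemma fiber_perm : perm_eq (fiber N (a :: t') tau') (map (ins (a :: t')) (Vset a w)).
Proof.
have [w0 wN] := andP w_bound.
apply: uniq_perm.
- by rewrite filter_uniq // S312_uniq.
- rewrite map_inj_uniq; last exact: ins_inj.
  rewrite /Vset; case: ifP; case: ifP => //= /eqP -> _ //.
- move=> s; rewrite fiber_mem; apply/hasP/mapP => [[v vV /eqP e]|[v vV e]]; exists v => //.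
  by apply/eqP.
Qed.

Lemma fiber_flags : perm_eq (map flag (fiber N (a :: t') tau')) (opts (a == 1, w == 1)).
Proof.
have [w0 wN] := andP w_bound; have [a0 aN] := andP a_bound.
apply: perm_trans (perm_map flag fiber_perm) _.
rewrite -map_comp /Vset.
have [aw|wa] := leqP a w.
  case: ifP => [/eqP w1|w1].
    have a1 : a = 1 by lia.
    rewrite /= !flag_ins /sh a1 w1 /=; exact: perm_refl.
  rewrite /= flag_ins /opts /= andbF.
  have -> : (sh w.+1 a == 1) = (a == 1).
    rewrite /sh; have -> : (w.+1 <= a) = false by apply/negbTE; rewrite -ltnNge; lia.
    by rewrite addn0.
  have -> : (w.+1 == 1) = false by apply/negbTE; lia.
  exact: perm_refl.
have w1 : w = 1 by case: (ltnP 1 w) => h; [have := no_bad h; lia | lia].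
rewrite w1 /= flag_ins /sh /opts /=.
have -> : (a == 1) = false by apply/negbTE; lia.
have -> : (a + (0 < a) == 1) = false by rewrite a0; apply/negbTE; lia.
exact: perm_refl.
Qed.

End Fib.


Fixpoint prodlists {T : Type} (Ls : seq (seq T)) : seq (seq T) :=
  if Ls is L :: Ls' then [seq x :: w | x <- L, w <- prodlists Ls'] else [:: [::]].

Lemma lists_ofE {T : Type} (L : seq T) d : lists_of L d = prodlists (nseq d L).
Proof. by elim: d => //= d ->. Qed.

Lemma prodlistsP (T : eqType) (x0 : T) (Ls : seq (seq T)) (W : seq T) :
  reflect (size W = size Ls /\ forall i, i < size Ls -> nth x0 W i \in nth [::] Ls i)
          (W \in prodlists Ls).
Proof.
elim: Ls W => [|L Ls IH] W /=.
  rewrite inE; apply: (iffP eqP) => [->|[]] //; by case: W.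
apply: (iffP allpairsP) => [[[x w] [/= xL wP ->]]|[sz h]].
  have [sw hw] := IH w wP; split; first by rewrite /= sw.
  by case=> [|i] //= /hw.
case: W sz h => // x w [sz] h; exists (x, w); split => //.
- by have := h 0 erefl.
- by apply/IH; split => // i ii; have := h i.+1 ii.
Qed.

Lemma prodlists_uniq (T : eqType) (Ls : seq (seq T)) : all uniq Ls -> uniq (prodlists Ls).
Proof.
elim: Ls => [|L Ls IH] //= /andP [uL uLs].
apply: allpairs_uniq => //; first exact: IH.
move=> [x w] [x' w'] _ _; rewrite /uncurry /= => e; by case: e => -> ->.
Qed.

Lemma sum_prodlists (A B : eqType) (f : A -> B) (g : seq B -> nat) (Fs : seq (seq A)) (Os : seq (seq B)) :
  size Fs = size Os -> (forall i, i < size Fs -> perm_eq (map f (nth [::] Fs i)) (nth [::] Os i)) ->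
  \sum_(W <- prodlists Fs) g (map f W) = \sum_(s <- prodlists Os) g s.
Proof.
elim: Fs Os g => [|F Fs IH] [|O Os] g sz0 hp //; first by rewrite /= !big_cons !big_nil.
have sz : size Fs = size Os by case: sz0.
rewrite /=.
rewrite !big_allpairs_dep /=.
transitivity (\sum_(x <- F) \sum_(s <- prodlists Os) g (f x :: s)).
  apply: eq_bigr => x _; apply: (IH Os (fun s => g (f x :: s))) => // i ii.
  exact: (hp i.+1).
rewrite -(big_map f xpredT (fun y => \sum_(s <- prodlists Os) g (y :: s))).
by apply: perm_big; exact: (hp 0).
Qed.

Definition pairs (s : seq (bool * bool)) : seq (bool * bool) :=
  [seq ((nth (false, false) s i).1, (nth (false, false) s (i.+1 %% size s)).2) | i <- iota 0 (size s)].
Definition nexts s := prodlists (map opts (pairs s)).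
Fixpoint Count (k : nat) (s : seq (bool * bool)) : nat :=
  if k is k'.+1 then \sum_(s' <- nexts s) Count k' s' else 1.

Definition cA (s : seq (bool * bool)) := count (fun p => p.1) s.
Definition cB (s : seq (bool * bool)) := count (fun p => p.2) s.

Lemma pascal (ps : seq (bool * bool)) X Y :
  \sum_(s' <- prodlists (map opts ps)) 'C(X + Y + cA s' + cB s', X + cA s')
  = 'C(X + Y + cA ps + cB ps, X + cA ps).
Proof.
elim: ps X Y => [|[a b] ps IH] X Y /=.
  by rewrite big_cons big_nil /cA /cB /= !addn0.
rewrite big_allpairs_dep /opts /=.
case: a; case: b => /=; rewrite ?big_cons ?big_nil ?addn0.
- have e1 := IH X.+1 Y; have e2 := IH X Y.+1.
  under eq_bigr => s' _ do rewrite /cA /cB /= -/(cA s') -/(cB s').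
  under [X in _ + X]eq_bigr => s' _ do rewrite /cA /cB /= -/(cA s') -/(cB s').
  rewrite /cA /cB /= -/(cA ps) -/(cB ps).
  have -> : \sum_(i <- prodlists [seq opts i | i <- ps]) 'C(X + Y + (1 + cA i) + (0 + cB i), X + (1 + cA i))
      = 'C(X.+1 + Y + cA ps + cB ps, X.+1 + cA ps).
    rewrite -e1; apply: eq_bigr => s' _; congr binomial; lia.
  have -> : \sum_(i <- prodlists [seq opts i | i <- ps]) 'C(X + Y + (0 + cA i) + (1 + cB i), X + (0 + cA i))
      = 'C(X + Y.+1 + cA ps + cB ps, X + cA ps).
    rewrite -e2; apply: eq_bigr => s' _; congr binomial; lia.
  have -> : X + Y + (1 + cA ps) + (1 + cB ps) = (X + Y + cA ps + cB ps).+2 by lia.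
  have -> : X + (1 + cA ps) = (X + cA ps).+1 by lia.
  rewrite binS; congr addn; congr binomial; lia.
- transitivity 'C(X.+1 + Y + cA ps + cB ps, X.+1 + cA ps); last by congr binomial; lia.
  rewrite -(IH X.+1 Y); apply: eq_bigr => s' _ /=; congr binomial; lia.
- transitivity 'C(X + Y.+1 + cA ps + cB ps, X + cA ps); last by congr binomial; lia.
  rewrite -(IH X Y.+1); apply: eq_bigr => s' _ /=; congr binomial; lia.
- transitivity 'C(X + Y + cA ps + cB ps, X + cA ps); last by congr binomial; lia.
  rewrite -(IH X Y); apply: eq_bigr => s' _ /=; congr binomial; lia.
Qed.


Definition dist d i j := ((j + d - i.+1) %% d).+1.

Lemma dist_eq d i j : i < d -> j < d -> dist d i j = if i < j then j - i else d - (i - j).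
Proof.
move=> id jd; rewrite /dist; case: ltnP => ij.
  have -> : j + d - i.+1 = (j - i.+1) + d by lia.
  rewrite modnDr modn_small; lia.
rewrite modn_small; lia.
Qed.

Lemma modS_eq j d : j < d -> j.+1 %% d = if j.+1 == d then 0 else j.+1.
Proof.
move=> jd; case: eqP => [->|ne]; first by rewrite modnn.
by rewrite modn_small //; lia.
Qed.

Definition Inv k (s : seq (bool * bool)) := forall i j, i < size s -> j < size s ->
  (nth (false, false) s i).1 -> (nth (false, false) s j).2 -> dist (size s) i j <= k.

Lemma opts_prop1 p p' : p' \in opts p -> [/\ p'.1 -> p.1, p'.2 -> p.2 & ~~ (p'.1 && p'.2)].
Proof.
case: p => [[] []]; rewrite /opts /= !inE.
- by case/orP => /eqP ->.
- by move/eqP => ->.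
- by move/eqP => ->.
- by move/eqP => ->.
Qed.

Lemma nexts_mem s s' : s' \in nexts s -> size s' = size s /\ forall i, i < size s ->
  nth (false, false) s' i \in opts ((nth (false, false) s i).1, (nth (false, false) s (i.+1 %% size s)).2).
Proof.
move/(prodlistsP (false, false)) => [sz h]; rewrite !size_map size_iota in sz h.
split => // i ii; have := h i ii.
by rewrite (nth_map (false, false)) ?size_map ?size_iota // (nth_map 0) ?size_iota // nth_iota.
Qed.

Lemma Inv_step k s s' : 0 < size s -> Inv k.+1 s -> s' \in nexts s -> Inv k s'.
Proof.
move=> d0 hI /nexts_mem [sz h] i j; rewrite sz => id jd ai bj.
have [hi1 _ hi3] := opts_prop1 (h i id).
have [_ hj2 _] := opts_prop1 (h j jd).
have ne : i != j by apply/eqP => ej; move: hi3; rewrite ai ej bj.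
have jm : j.+1 %% size s < size s by rewrite ltn_mod.
have := hI i (j.+1 %% size s) id jm (hi1 ai) (hj2 bj).
rewrite !dist_eq ?ltn_mod // modS_eq //.
case: eqP => e /=; case: ltnP => h1; case: ltnP => h2; try lia.
Qed.

Lemma count_idx' (T : Type) (x0 : T) (p : pred T) (s : seq T) :
  count p s = count (fun j => p (nth x0 s j)) (iota 0 (size s)).
Proof. by rewrite -{1}(mkseq_nth x0 s) /mkseq count_map. Qed.

Lemma rot1_nth (T : Type) (x0 : T) (s : seq T) :
  [seq nth x0 s (i.+1 %% size s) | i <- iota 0 (size s)] = rot 1 s.
Proof.
case: s => [|x s] //; rewrite rot1_cons.
apply: (@eq_from_nth _ x0); first by rewrite size_map size_iota size_rcons.
rewrite size_map size_iota => i ii.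
rewrite (nth_map 0) ?size_iota // nth_iota // add0n nth_rcons /=.
move: ii; rewrite ltnS leq_eqVlt => /orP [/eqP ->|ii].
  by rewrite ltnn eqxx modnn.
by rewrite ii modn_small.
Qed.

Lemma cA_pairs s : cA (pairs s) = cA s.
Proof. by rewrite /cA /pairs count_map (count_idx' (false, false) _ s). Qed.

Lemma cB_pairs s : cB (pairs s) = cB s.
Proof.
rewrite /cB /pairs count_map.
have -> : count (preim (fun i => ((nth (false, false) s i).1, (nth (false, false) s (i.+1 %% size s)).2)) (fun p => p.2)) (iota 0 (size s))
  = count (fun p => p.2) [seq nth (false, false) s (i.+1 %% size s) | i <- iota 0 (size s)].
  by rewrite count_map.
by rewrite rot1_nth; apply/permP; rewrite perm_rot.
Qed.

Lemma Count_binom k s : 0 < size s -> Inv k s -> Count k s = 'C(cA s + cB s, cA s).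
Proof.
elim: k s => [|k IH] s d0 hI /=.
  case: (posnP (cA s)) => [->|hA]; first by rewrite bin0.
  suff -> : cB s = 0 by rewrite addn0 binn.
  apply/eqP; rewrite -leqn0 leqNgt; apply/negP => hB.
  move: hA hB; rewrite /cA /cB -!has_count => /hasP [x xs ax] /hasP [y ys by_].
  have [i ii ei] : exists2 i, i < size s & nth (false, false) s i = x.
    by apply/nthP.
  have [j jj ej] : exists2 j, j < size s & nth (false, false) s j = y.
    by apply/nthP.
  have := hI i j ii jj; rewrite ei ej => /(_ ax by_).
  by rewrite /dist ltn0.
rewrite (eq_big_seq (fun s' => 'C(cA s' + cB s', cA s'))); last first.
  move=> s' ms'; apply: IH; first by have [-> _] := nexts_mem ms'.
  exact: Inv_step ms'.
have := pascal (pairs s) 0 0; rewrite !add0n cA_pairs cB_pairs => <-.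
by [].
Qed.


Definition CW m d := [seq W <- lists_of (S312 m.+1) d | is_closed_walk W].
Definition fibs m (W : seq (seq nat)) :=
  [seq fiber m (nth [::] W i) (nth [::] W (i.+1 %% size W)) | i <- iota 0 (size W)].

Lemma mem_lists_of (L : seq (seq nat)) d W :
  (W \in lists_of L d) = (size W == d) && all (mem L) W.
Proof.
rewrite lists_ofE; apply/(prodlistsP [::])/andP => [[sz h]|[/eqP sz /(all_nthP [::]) h]].
  rewrite size_nseq in sz h; split; first by apply/eqP.
  by apply/(all_nthP [::]) => i ii; have := h i; rewrite nth_nseq -sz ii => /(_ isT).
split; first by rewrite size_nseq.
by move=> i; rewrite size_nseq nth_nseq => ii; rewrite ii; apply: h; rewrite sz.
Qed.

Lemma closedP W : reflect (forall i, i < size W ->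
   edge_head (nth [::] W i) = edge_tail (nth [::] W (i.+1 %% size W))) (is_closed_walk W).
Proof.
apply: (iffP allP) => [h i ii|h i]; first by apply/eqP; apply: h; rewrite mem_iota.
by rewrite mem_iota => /andP [_ ii]; apply/eqP; apply: h.
Qed.

Lemma mem_CW m d W : (W \in CW m d) = [&& size W == d, all (mem (S312 m.+1)) W & is_closed_walk W].
Proof. by rewrite mem_filter mem_lists_of andbC andbA. Qed.

Lemma CW_uniq m d : uniq (CW m d).
Proof.
rewrite filter_uniq // lists_ofE prodlists_uniq // all_nseq.
by rewrite S312_uniq orbT.
Qed.

Lemma avoids_take k s : avoids312 s -> avoids312 (take k s).
Proof.
move=> h; apply: avoidsI => i j l ij jl; rewrite size_take => lt.
have [lk ls] : l < k /\ l < size s by move: lt; case: (ltnP k (size s)) => h1 h2; lia.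
rewrite !nth_take; try lia.
exact: avoidsP.
Qed.

Lemma avoids_behead s : avoids312 s -> avoids312 (behead s).
Proof.
move=> h; apply: avoidsI => i j l ij jl; rewrite size_behead => ls.
rewrite !nth_behead; apply: avoidsP => //; lia.
Qed.

Lemma tail_S312 N s : s \in S312 N.+1 -> edge_tail s \in S312 N.
Proof.
rewrite !mem_S312 => /andP [p av].
have sz : size s = N.+1 by rewrite (perm_size p) size_iota.
have u : uniq (take N s) by apply: take_uniq; exact: perm_iota_uniq p.
rewrite /edge_tail sz /=; apply/andP; split.
  by have := std_uniq_perm u; rewrite size_take sz ltnSn /=.
by rewrite -(avoids_same (samecmp_std u)); apply: avoids_take.
Qed.

Lemma behead_take (s : seq nat) n : behead (take n s) = take n.-1 (behead s).
Proof. by case: s => [|x s]; case: n => //=; rewrite take0. Qed.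

Lemma head_tail_comm N s : s \in S312 N.+1 -> edge_head (edge_tail s) = edge_tail (edge_head s).
Proof.
rewrite mem_S312 => /andP [p _].
have sz : size s = N.+1 by rewrite (perm_size p) size_iota.
have us := perm_iota_uniq p.
rewrite /edge_head /edge_tail sz /= std_behead_std ?take_uniq //.
rewrite size_std size_behead sz /= std_take_std; last by case: s us {sz p} => //= x s /andP [].
by rewrite behead_take.
Qed.

Lemma tails_CW m d W' : W' \in CW m.+1 d -> map edge_tail W' \in CW m d.
Proof.
rewrite !mem_CW => /and3P [/eqP sz /allP al /closedP cl].
rewrite size_map sz eqxx /=; apply/andP; split.
  by apply/allP => x /mapP [y yW ->]; apply: tail_S312; exact: al.
apply/closedP; rewrite size_map => i ii.
rewrite !(nth_map [::]) ?ltn_mod; try lia.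
rewrite (head_tail_comm (N := m.+1)) ?cl //; last by apply: al; apply: mem_nth.
Qed.


Lemma partition_seq (A B : eqType) (f : A -> B) (s : seq A) (t : seq B) (F : A -> nat) :
  uniq t -> (forall x, x \in s -> f x \in t) ->
  \sum_(x <- s) F x = \sum_(y <- t) \sum_(x <- s | f x == y) F x.
Proof.
move=> ut ht.
under [RHS]eq_bigr => y _ do rewrite big_mkcond.
rewrite [RHS]exchange_big /=; apply: eq_big_seq => x xs.
rewrite -(big_mkcond (fun y => f x == y)) -big_filter.
have -> : [seq y <- t | f x == y] = [:: f x].
  by rewrite (@eq_filter _ _ (pred1 (f x))) ?filter_pred1_uniq ?ht // => y /=; rewrite eq_sym.
by rewrite big_seq1.
Qed.

Lemma fibs_mem m d W W' : 0 < d -> W \in CW m d ->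
  ((W' \in CW m.+1 d) && (map edge_tail W' == W)) = (W' \in prodlists (fibs m W)).
Proof.
move=> d0; rewrite mem_CW => /and3P [/eqP szW alW /closedP clW].
apply/idP/(prodlistsP [::]).
  rewrite mem_CW => /andP [/and3P [/eqP sz /allP al /closedP cl] /eqP et].
  rewrite /fibs size_map size_iota szW; split => // i ii.
  have inS : nth [::] W' i \in S312 m.+2 by apply: al; apply: mem_nth; rewrite sz.
  rewrite (nth_map 0) ?size_iota ?szW // nth_iota //= /fiber mem_filter inS andbT.
  have ti : edge_tail (nth [::] W' i) = nth [::] W i.
    by rewrite -et (nth_map [::]) // sz.
  rewrite ti eqxx /= -et (nth_map [::]); last by rewrite sz ltn_mod.
  by rewrite cl ?sz // size_map sz.
rewrite /fibs size_map size_iota szW => [[sz h]].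
have hi i : i < d -> [/\ nth [::] W' i \in S312 m.+2, edge_tail (nth [::] W' i) = nth [::] W i &
     edge_head (nth [::] W' i) = nth [::] W (i.+1 %% d)].
  move=> ii; have := h i ii; rewrite (nth_map 0) ?size_iota ?szW // nth_iota //= /fiber mem_filter.
  by case/andP => /andP [/eqP -> /eqP ->] ->.
have et : map edge_tail W' = W.
  apply: (@eq_from_nth _ [::]); first by rewrite size_map sz szW.
  rewrite size_map sz => i ii; rewrite (nth_map [::]) ?sz //.
  by have [_ -> _] := hi i ii.
rewrite et eqxx andbT mem_CW sz eqxx /=; apply/andP; split.
  by apply/(all_nthP [::]) => i; rewrite sz => ii; have [H _ _] := hi i ii.
apply/closedP; rewrite sz => i ii.
have [_ _ ->] := hi i ii.
have im : i.+1 %% d < d by rewrite ltn_mod.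
by have [_ -> _] := hi (i.+1 %% d) im.
Qed.

Lemma step m d (g : seq (bool * bool) -> nat) : 0 < d ->
  \sum_(W' <- CW m.+1 d) g (map flag W') = \sum_(W <- CW m d) \sum_(s' <- nexts (map flag W)) g s'.
Proof.
move=> d0.
rewrite (@partition_seq _ _ (map edge_tail) _ (CW m d)) ?CW_uniq //; last by move=> x; apply: tails_CW.
apply: eq_big_seq => W WC.
rewrite -big_filter.
have WC' := WC; rewrite mem_CW in WC'; move/and3P: WC' => [/eqP szW /allP alW /closedP clW].
rewrite (@perm_big _ _ _ _ _ (prodlists (fibs m W))); last first.
  apply: uniq_perm.
  - by rewrite filter_uniq ?CW_uniq.
  - apply: prodlists_uniq; apply/allP => F /mapP [i _ ->].
    by rewrite filter_uniq // S312_uniq.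
  - by move=> W'; rewrite mem_filter andbC fibs_mem.
apply: sum_prodlists.
  by rewrite /fibs /pairs !size_map !size_iota.
rewrite /fibs size_map size_iota => i ii.
rewrite (nth_map (false, false)); last by rewrite /pairs size_map size_iota size_map.
rewrite (nth_map 0) ?size_iota // nth_iota //.
rewrite /pairs size_map (nth_map 0) ?size_iota // nth_iota //= ?add0n -?szW.
have mi : nth [::] W i \in S312 m.+1 by apply: alW; apply: mem_nth.
have mj : nth [::] W (i.+1 %% size W) \in S312 m.+1 by apply: alW; apply: mem_nth; rewrite ltn_mod szW.
have hc := clW i ii.
rewrite !(nth_map [::]) ?ltn_mod ?szW //.
rewrite -szW.
move: mi hc; case: (nth [::] W i) => [|a t'] mi hc.
  by move: mi; rewrite mem_S312 => /andP [/perm_size]; rewrite size_iota.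
exact: (fiber_flags mi mj hc).
by rewrite -szW.
Qed.

Lemma CW0 d : CW 0 d = [:: nseq d [:: 1]].
Proof.
rewrite /CW.
have -> : S312 1 = [:: [:: 1]] by [].
have -> : lists_of [:: [:: 1]] d = [:: nseq d [:: 1]] by elim: d => //= d ->.
rewrite /= ifT //; apply/allP => i; rewrite mem_iota size_nseq => /andP [_ id].
by rewrite !nth_nseq id ltn_mod; case: d id.
Qed.

Lemma sumCount m d k : 0 < d ->
  \sum_(W <- CW m d) Count k (map flag W) = Count (m + k) (nseq d (true, true)).
Proof.
move=> d0; elim: m k => [|m IH] k.
  rewrite CW0 big_seq1; congr Count.
  by rewrite map_nseq.
rewrite step //.
transitivity (\sum_(W <- CW m d) Count k.+1 (map flag W)); first by [].
by rewrite IH addnS addSn.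
Qed.


Theorem theorem5p1 (n d : nat) :
  1 <= n -> 0 < d -> d <= n -> num_closed_walks n d = 'C(2 * d, d).
Proof.
move=> n1 d0 dn.
have -> : num_closed_walks n d = size (CW n d) by rewrite /num_closed_walks /CW size_filter.
rewrite -sum1_size.
transitivity (\sum_(W <- CW n d) Count 0 (map flag W)); first by [].
rewrite sumCount // addn0 Count_binom ?size_nseq //.
  by rewrite /cA /cB !count_nseq /= !mul1n mul2n addnn.
move=> i j; rewrite size_nseq => id jd _ _.
rewrite /dist; have := ltn_mod (j + d - i.+1) d; rewrite d0; lia.
Qed.
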